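(* Let $W$ be a normal PO-dilator and $X$ a partial order. Then the partial order $\mathcal T W(X)$ together with the functions $\iota_X$ and $\kappa_X$ forms a Kruskal fixed point of $W$ over $X$.
   Context: A quasi embedding between partial orders $X,Y$ is a function $f$ with $f(x)\leq_Y f(y)\Rightarrow x\leq_X y$; an embedding also satisfies the converse. $\mathrm{PO}$ is the category of partial orders and quasi embeddings. $[X]^{<\omega}$ denotes the finite subsets of $X$, with $[f]^{<\omega}(a)=\{f(x)\mid x\in a\}$; subsets of partial orders are regarded as suborders and $\iota_a$ denotes an inclusion map. A PO-dilator is a functor $W:\mathrm{PO}\to\mathrm{PO}$ mapping embeddings to embeddings, with a natural transformation $\operatorname{supp}^W:W\Rightarrow[\cdot]^{<\omega}$ such that for every embedding $f:X\to Y$, $\operatorname{rng}(W(f))=\{\sigma\in W(Y)\mid\operatorname{supp}^W_Y(\sigma)\subseteq\operatorname{rng}(f)\}$. For finite $a,b\subseteq X$, $a\leq^{\mathrm{fin}}_X b$ iff every $x\in a$ has some $y\in b$ with $x\leq_X y$ (for a single element $z$ write $z\leq^{\mathrm{fin}}_X b$ for $\{z\}\leq^{\mathrm{fin}}_X b$). $W$ is normal if $\sigma\leq_{W(X)}\tau$ implies $\operatorname{supp}^W_X(\sigma)\leq^{\mathrm{fin}}_X\operatorname{supp}^W_X(\tau)$. For $\sigma\in W(X)$ one writes $\sigma=_{\mathrm{NF}}W(\iota_a)(\sigma_0)$ if $a\in[X]^{<\omega}$, $\sigma_0\in W(a)$, $\sigma=W(\iota_a)(\sigma_0)$ and $\operatorname{supp}^W_a(\sigma_0)=a$;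 every $\sigma$ has exactly one such representation. For a normal PO-dilator $W$ and partial order $X$, the set $\mathcal T W(X)$ and relation $\leq_{\mathcal T W(X)}$ are defined by simultaneous recursion. Terms: (i) $\overline x$ for each $x\in X$; (ii) for each finite $a\subseteq\mathcal T W(X)$ on which the restriction of $\leq_{\mathcal T W(X)}$ is a partial order, and each $\sigma\in W(a)$ with $\operatorname{supp}^W_a(\sigma)=a$, a term $\circ(a,\sigma)$. Relation: $s\leq_{\mathcal T W(X)}t$ iff (i') $s=\overline x$, $t=\overline y$, $x\leq_X y$; or (ii') $t=\circ(b,\tau)$ and $s\leq_{\mathcal T W(X)}t'$ for some $t'\in b$; or (iii') $s=\circ(a,\sigma)$, $t=\circ(b,\tau)$, the restriction of $\leq_{\mathcal T W(X)}$ to $a\cup b$ is a partial order, and $W(\iota_a)(\sigma)\leq_{W(a\cup b)}W(\iota_b)(\tau)$ for the inclusions into $a\cup b$. (The recursion is along the length $l(\overline x)=0$, $l(\circ(a,\sigma))=1+\sum_{r\in a}2\,l(r)$.) The relation $\leq_{\mathcal T W(X)}$ is a partial order on $\mathcal T W(X)$. Define $\iota_X:X\to\mathcal T W(X)$ by $\iota_X(x)=\overline x$ and $\kappa_X:W(\mathcal T W(X))\to\mathcal T W(X)$ by $\kappa_X(\sigma)=\circ(a,\sigma_0)$ where $\sigma=_{\mathrm{NF}}W(\iota_a)(\sigma_0)$. A Kruskal fixed point of a normal PO-dilator $W$ over a partial order $X$ is a partial order $Z$ with functions $\iota:X\to Z$ and $\kappa:W(Z)\to Z$ such that $\operatorname{rng}(\iota)\cap\operatorname{rng}(\kappa)=\emptyset$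 and: $\iota(x)\leq_Z\iota(y)$ implies $x\leq_X y$; $\iota(x)\leq_Z\kappa(\tau)$ iff $\iota(x)\leq^{\mathrm{fin}}_Z\operatorname{supp}^W_Z(\tau)$; $\kappa(\sigma)\not\leq_Z\iota(y)$ for all $\sigma,y$; and $\kappa(\sigma)\leq_Z\kappa(\tau)$ iff ($\sigma\leq_{W(Z)}\tau$ or $\kappa(\sigma)\leq^{\mathrm{fin}}_Z\operatorname{supp}^W_Z(\tau)$), for all $x,y\in X$, $\sigma,\tau\in W(Z)$. *)

(* Defs.v *)
(* partial orders with Prop-valued relations on
   arbitrary types, since terms of T W(X) have no decidable equality. *)
From Stdlib Require Import List ProofIrrelevance.
Set Implicit Arguments.
Unset Strict Implicit.

Record po := PO {
  car :> Type;
  ple : car -> car -> Prop;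
  ple_refl : forall x, ple x x;
  ple_trans : forall x y z, ple x y -> ple y z -> ple x z;
  ple_anti : forall x y, ple x y -> ple y x -> x = y }.
Arguments ple {p} _ _.

Definition quasi_emb (X Y : po) (f : X -> Y) : Prop :=
  forall x y, ple (f x) (f y) -> ple x y.
Definition is_emb (X Y : po) (f : X -> Y) : Prop :=
  forall x y, ple (f x) (f y) <-> ple x y.

Record qemb (X Y : po) := QEmb { qfun :> X -> Y; qfunP : quasi_emb qfun }.

Definition qid (X : po) : qemb X X := @QEmb X X (fun x => x) (fun x y h => h).

Definition qcomp (X Y Z : po) (g : qemb Y Z) (f : qemb X Y) : qemb X Z :=
  @QEmb X Z (fun x => g (f x))
    (fun x y h => @qfunP X Y f x y (@qfunP Y Z g (f x) (f y) h)).

Definition finite (T : Type) (A : T -> Prop) : Prop :=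
  exists l : list T, forall x, A x -> In x l.

Definition is_po (T : Type) (R : T -> T -> Prop) : Prop :=
  (forall x, R x x) /\ (forall x y z, R x y -> R y z -> R x z) /\
  (forall x y, R x y -> R y x -> x = y).

Definition po_on (T : Type) (R : T -> T -> Prop) (A : T -> Prop) : Prop :=
  (forall x, A x -> R x x) /\
  (forall x y z, A x -> A y -> A z -> R x y -> R y z -> R x z) /\
  (forall x y, A x -> A y -> R x y -> R y x -> x = y).

Definition PO_of (T : Type) (R : T -> T -> Prop) (H : is_po R) : po :=
  @PO T R (proj1 H) (proj1 (proj2 H)) (proj2 (proj2 H)).

Definition subPO (T : Type) (R : T -> T -> Prop) (A : T -> Prop) (h : po_on R A) : po.
Proof.
  refine (@PO {x : T | A x} (fun u v => R (proj1_sig u) (proj1_sig v)) _ _ _).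
  - intros [x hx]; exact (proj1 h x hx).
  - intros [x hx] [y hy] [z hz]; exact (proj1 (proj2 h) x y z hx hy hz).
  - intros [x hx] [y hy] hxy hyx; simpl in *.
    apply subset_eq_compat; exact (proj2 (proj2 h) x y hx hy hxy hyx).
Defined.

Definition incl_sub (T : Type) (R : T -> T -> Prop) (A B : T -> Prop)
  (hA : po_on R A) (hB : po_on R B) (sAB : forall x, A x -> B x) :
  qemb (subPO hA) (subPO hB) :=
  @QEmb (subPO hA) (subPO hB)
    (fun u => exist B (proj1_sig u) (sAB _ (proj2_sig u)))
    (fun u v h => h).

Definition incl_top (T : Type) (R : T -> T -> Prop) (H : is_po R)
  (A : T -> Prop) (hA : po_on R A) : qemb (subPO hA) (PO_of H) :=
  @QEmb (subPO hA) (PO_of H) (fun u => proj1_sig u) (fun u v h => h).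

Record dilator := Dilator {
  Wo :> po -> po;
  Wm : forall X Y : po, qemb X Y -> qemb (Wo X) (Wo Y);
  Wm_id : forall (X : po) (s : Wo X), Wm (qid X) s = s;
  Wm_comp : forall (X Y Z : po) (f : qemb X Y) (g : qemb Y Z) (s : Wo X),
      Wm (qcomp g f) s = Wm g (Wm f s);
  Wm_emb : forall (X Y : po) (f : qemb X Y), is_emb f -> is_emb (Wm f);
  supp : forall X : po, Wo X -> X -> Prop;
  supp_fin : forall (X : po) (s : Wo X), finite (supp s);
  supp_nat : forall (X Y : po) (f : qemb X Y) (s : Wo X) (y : Y),
      supp (Wm f s) y <-> exists x, supp s x /\ f x = y;
  supp_rng : forall (X Y : po) (f : qemb X Y), is_emb f ->
      forall t : Wo Y, (exists s, Wm f s = t) <-> (forall y, supp t y -> exists x, f x = y) }.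
Arguments Wm d {X Y} _.
Arguments supp d {X} _ _.

Definition fin_le (Z : po) (a b : Z -> Prop) : Prop :=
  forall x, a x -> exists y, b y /\ ple x y.
Definition fin_le1 (Z : po) (z : Z) (b : Z -> Prop) : Prop :=
  fin_le (fun x => x = z) b.

Definition normal (W : dilator) : Prop :=
  forall (X : po) (s t : W X), ple s t -> fin_le (supp W s) (supp W t).

Definition kruskal_fp (W : dilator) (X Z : po) (iota : X -> Z) (kappa : W Z -> Z) : Prop :=
  (forall x s, iota x <> kappa s) /\
  (forall x y : X, ple (iota x) (iota y) -> ple x y) /\
  (forall x t, ple (iota x) (kappa t) <-> fin_le1 (iota x) (supp W t)) /\
  (forall s y, ~ ple (kappa s) (iota y)) /\
  (forall s t, ple (kappa s) (kappa t) <-> ple s t \/ fin_le1 (kappa s) (supp W t)).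

(** Rocq has no induction-recursion, so T W(X) (terms and the relation defined
  by simultaneous recursion) is specified by its defining clauses: a type of
  terms freely and well-foundedly generated by  bar x  and  circ(a, sigma),
  where  a  ranges over subsets on which the relation restricts to a partial
  order and  sigma  over elements of W(a) with support a, together with a
  relation satisfying exactly the clauses (i'),(ii'),(iii').  These clauses
  determine the terms and the relation uniquely up to isomorphism. *)

Record node_data (W : dilator) (T : Type) (R : T -> T -> Prop) := Node {
  nd_set : T -> Prop;
  nd_po : po_on R nd_set;
  nd_elt : W (subPO nd_po);
  nd_supp : forall u, supp W nd_elt u }.
Arguments nd_set {W T R} _ _.
Arguments nd_po {W T R} _.
Arguments nd_elt {W T R} _.

Definition union2 (T : Type) (A B : T -> Prop) : T -> Prop := fun x => A x \/ B x.

Record term_model (W : dilator) (X : po) := TermModel {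
  tm :> Type;
  tle : tm -> tm -> Prop;
  tbar : X -> tm;
  tnode : node_data W tle -> tm;
  tbar_inj : forall x y, tbar x = tbar y -> x = y;
  tnode_inj : forall d e, tnode d = tnode e -> d = e;
  tbar_node : forall x d, tbar x <> tnode d;
  tm_ind : forall P : tm -> Prop,
      (forall x, P (tbar x)) ->
      (forall d, (forall u, nd_set d u -> P u) -> P (tnode d)) ->
      forall t, P t;
  tle_def : forall s t, tle s t <->
      (exists x y, s = tbar x /\ t = tbar y /\ ple x y) \/
      (exists e, t = tnode e /\ exists u, nd_set e u /\ tle s u) \/
      (exists d e, s = tnode d /\ t = tnode e /\
         exists h : po_on tle (union2 (nd_set d) (nd_set e)),
           ple (Wm W (incl_sub (nd_po d) h (fun x hx => or_introl hx)) (nd_elt d))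
               (Wm W (incl_sub (nd_po e) h (fun x hx => or_intror hx)) (nd_elt e))) }.
Arguments tle {W X} _ _ _.
Arguments tbar {W X} _ _.
Arguments tnode {W X} _ _.
Arguments kruskal_fp W X Z iota kappa : clear implicits.

(* Main.v *)
Require Import Defs.
From Stdlib Require Import List ProofIrrelevance FunctionalExtensionality PropExtensionality Lia.
Set Implicit Arguments.
Unset Strict Implicit.

Lemma qemb_ext (X Y : po) (f g : qemb X Y) : (forall x, f x = g x) -> f = g.
Proof.
  destruct f as [f pf], g as [g pg]; simpl; intro E.
  assert (f = g) by (apply functional_extensionality; auto). subst g.
  f_equal. apply proof_irrelevance.
Qed.

Lemma incl_comp (T : Type) (R : T -> T -> Prop) (A B C : T -> Prop)
  (hA : po_on R A) (hB : po_on R B) (hC : po_on R C) sAB sBC sAC :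
  qcomp (incl_sub hB hC sBC) (incl_sub hA hB sAB) = incl_sub hA hC sAC.
Proof. apply qemb_ext; intros [x hx]; simpl. apply subset_eq_compat. reflexivity. Qed.

Lemma incl_sub_eq (T : Type) (R : T -> T -> Prop) (A B : T -> Prop)
  (hA : po_on R A) (hB : po_on R B) s1 s2 :
  incl_sub hA hB s1 = incl_sub hA hB s2.
Proof. apply qemb_ext; intros [x hx]; simpl. apply subset_eq_compat. reflexivity. Qed.

Lemma incl_top_comp (T : Type) (R : T -> T -> Prop) (H : is_po R) (A B : T -> Prop)
  (hA : po_on R A) (hB : po_on R B) s :
  qcomp (incl_top H hB) (incl_sub hA hB s) = incl_top H hA.
Proof. apply qemb_ext; intros [x hx]; simpl. reflexivity. Qed.

Lemma incl_sub_emb (T : Type) (R : T -> T -> Prop) (A B : T -> Prop)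
  (hA : po_on R A) (hB : po_on R B) s : is_emb (incl_sub hA hB s).
Proof. intros x y. apply iff_refl. Qed.

Lemma incl_top_emb (T : Type) (R : T -> T -> Prop) (H : is_po R) (A : T -> Prop)
  (hA : po_on R A) : is_emb (incl_top H hA).
Proof. intros x y. apply iff_refl. Qed.

Lemma W_incl_comp (W : dilator) (T : Type) (R : T -> T -> Prop) (A B C : T -> Prop)
  (hA : po_on R A) (hB : po_on R B) (hC : po_on R C) sAB sBC sAC (s : W (subPO hA)) :
  Wm W (incl_sub hB hC sBC) (Wm W (incl_sub hA hB sAB) s) = Wm W (incl_sub hA hC sAC) s.
Proof. rewrite <- Wm_comp. rewrite (incl_comp hA hB hC sAB sBC sAC). reflexivity. Qed.

Lemma W_top_comp (W : dilator) (T : Type) (R : T -> T -> Prop) (H : is_po R) (A B : T -> Prop)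
  (hA : po_on R A) (hB : po_on R B) s (σ : W (subPO hA)) :
  Wm W (incl_top H hB) (Wm W (incl_sub hA hB s) σ) = Wm W (incl_top H hA) σ.
Proof. rewrite <- Wm_comp. rewrite (incl_top_comp H hA hB s). reflexivity. Qed.

Lemma supp_incl (W : dilator) (T : Type) (R : T -> T -> Prop) (A B : T -> Prop)
  (hA : po_on R A) (hB : po_on R B) s (σ : W (subPO hA)) :
  (forall u, supp W σ u) -> forall y : subPO hB,
  supp W (Wm W (incl_sub hA hB s) σ) y <-> A (proj1_sig y).
Proof.
  intros Hs y; rewrite supp_nat; split.
  - intros [x [_ E]]; subst y; simpl; exact (proj2_sig x).
  - intros Ha; exists (exist _ (proj1_sig y) Ha); split; [apply Hs|].
    destruct y; simpl; apply subset_eq_compat; reflexivity.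
Qed.

Lemma supp_top (W : dilator) (T : Type) (R : T -> T -> Prop) (H : is_po R) (A : T -> Prop)
  (hA : po_on R A) (σ : W (subPO hA)) :
  (forall u, supp W σ u) -> forall y : PO_of H,
  supp W (Wm W (incl_top H hA) σ) y <-> A y.
Proof.
  intros Hs y; rewrite supp_nat; split.
  - intros [x [_ E]]; subst y; simpl; exact (proj2_sig x).
  - intros Ha; exists (exist _ y Ha); split; [apply Hs| reflexivity].
Qed.

Lemma po_on_sub (T : Type) (R : T -> T -> Prop) (A B : T -> Prop) :
  (forall x, B x -> A x) -> po_on R A -> po_on R B.
Proof.
  intros s [r [t a]]; split; [|split]; eauto.
Qed.

Lemma is_po_on (T : Type) (R : T -> T -> Prop) (A : T -> Prop) : is_po R -> po_on R A.
Proof. intros [r [t a]]; split; [|split]; eauto. Qed.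

Arguments W_incl_comp {W T R A B C} hA hB hC sAB sBC sAC s.
Arguments incl_sub_emb {T R A B} hA hB s _ _.
Arguments W_top_comp {W T R} H {A B} hA hB s σ.
Arguments incl_top_emb {T R} H {A} hA _ _.

Ltac bn := solve [exfalso; eapply tbar_node; eauto | exfalso; eapply tbar_node; symmetry; eauto].

Lemma tm_cases (W : dilator) (X : po) (TW : term_model W X) (t : TW) :
  (exists x, t = tbar TW x) \/ (exists d, t = tnode TW d).
Proof. induction t using (tm_ind (t0:=TW)); eauto. Qed.

Lemma le_bar_inv (W : dilator) (X : po) (TW : term_model W X) (s : TW) y :
  tle TW s (tbar TW y) -> exists x, s = tbar TW x /\ ple x y.
Proof.
  rewrite tle_def; intros [[x' [y' [E1 [E2 Hl]]]] | [[e [E _]] | [d [e [E1 [E _]]]]]].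
  - apply tbar_inj in E2; subst; eauto.
  - bn.
  - bn.
Qed.

Lemma le_bar_bar (W : dilator) (X : po) (TW : term_model W X) x y :
  tle TW (tbar TW x) (tbar TW y) -> ple x y.
Proof.
  intro H; destruct (le_bar_inv H) as [x' [E Hl]]; apply tbar_inj in E; subst; auto.
Qed.

Lemma node_le_bar_false (W : dilator) (X : po) (TW : term_model W X) d y :
  ~ tle TW (tnode TW d) (tbar TW y).
Proof. intro H; destruct (le_bar_inv H) as [x' [E Hl]]; bn. Qed.

Lemma tle_refl (W : dilator) (X : po) (TW : term_model W X) (t : TW) : tle TW t t.
Proof.
  destruct (tm_cases t) as [[x E] | [d E]]; subst; rewrite tle_def.
  - left; exists x, x; split; [|split]; auto; apply ple_refl.
  - right; right; exists d, d; split; [|split]; auto.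
    assert (h : po_on (tle TW) (union2 (nd_set d) (nd_set d))).
    { apply (po_on_sub (A := nd_set d)); [intros x [hx|hx]; exact hx | exact (nd_po d)]. }
    exists h.
    rewrite (incl_sub_eq (nd_po d) h (fun x hx => or_introl hx) (fun x hx => or_intror hx)).
    apply ple_refl.
Qed.

Lemma sub_le (W : dilator) (X : po) (TW : term_model W X) e (u : TW) :
  nd_set e u -> tle TW u (tnode TW e).
Proof.
  intro hu; rewrite tle_def; right; left; exists e; split; auto; exists u; split; auto.
  apply tle_refl.
Qed.

Inductive Dp (W : dilator) (X : po) (TW : term_model W X) : tm TW -> nat -> Prop :=
| Dbar : forall x n, @Dp W X TW (tbar TW x) n
| Dnode : forall d m, (forall u, nd_set d u -> @Dp W X TW u m) -> @Dp W X TW (tnode TW d) (S m).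
Arguments Dp {W X} TW _ _.

Lemma Dp_node_inv (W : dilator) (X : po) (TW : term_model W X) d n :
  Dp TW (tnode TW d) n -> exists m, n = S m /\ forall u, nd_set d u -> Dp TW u m.
Proof.
  intro H. remember (tnode TW d) as t eqn:Et. destruct H.
  - bn.
  - apply tnode_inj in Et; subst; eauto.
Qed.

Lemma Dp_mono (W : dilator) (X : po) (TW : term_model W X) t n n' :
  Dp TW t n -> n <= n' -> Dp TW t n'.
Proof.
  intro H; revert n'; induction H as [x n | d m Hu IH]; intros n' Hle.
  - constructor.
  - destruct n' as [|n']; [lia|]. constructor. intros u hu. apply IH; auto; lia.
Qed.

Lemma Dp_ex (W : dilator) (X : po) (TW : term_model W X) (t : TW) : exists n, Dp TW t n.
Proof.
  induction t as [x | d IH] using (tm_ind (t0:=TW)).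
  - exists 0; constructor.
  - destruct (supp_fin (nd_elt d)) as [l Hl].
    assert (HL : forall l' : list (subPO (nd_po d)), exists m,
               forall x, In x l' -> Dp TW (proj1_sig x) m).
    { induction l' as [|a l' [m Hm]].
      - exists 0; intros x [].
      - destruct (IH (proj1_sig a) (proj2_sig a)) as [na Ha].
        exists (na + m); intros x [E|Hx].
        + subst; apply (Dp_mono Ha); lia.
        + apply (Dp_mono (Hm x Hx)); lia. }
    destruct (HL l) as [m Hm]. exists (S m); constructor; intros u hu.
    apply (Hm (exist _ u hu)). apply Hl. apply nd_supp.
Qed.

Lemma HL (W : dilator) (X : po) (TW : term_model W X) (Hn : normal W) (t : TW) :
  forall s, tle TW s t -> forall n, Dp TW t n -> Dp TW s n.
Proof.
  induction t as [y | e IH] using (tm_ind (t0:=TW)); intros s Hst n Dt.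
  - destruct (le_bar_inv Hst) as [x [E _]]; subst; constructor.
  - destruct (Dp_node_inv Dt) as [m [En Hu]]; subst n.
    rewrite tle_def in Hst.
    destruct Hst as [[x' [y' [E1 [E2 Hl]]]] | [[e' [E [u [hu Hsu]]]] | [d [e' [E1 [E [h L]]]]]]].
    + bn.
    + apply tnode_inj in E; subst e'. apply (Dp_mono (IH u hu s Hsu m (Hu u hu))); lia.
    + apply tnode_inj in E; subst e' s. constructor. intros s' hs'.
      pose proof (Hn _ _ _ L) as F.
      destruct (F (exist _ s' (or_introl hs'))) as [y' [Sy' Ly']].
      { apply supp_incl; [apply nd_supp| exact hs']. }
      apply supp_incl in Sy'; [|apply nd_supp].
      exact (IH _ Sy' s' Ly' m (Hu _ Sy')).
Qed.

Lemma NS (W : dilator) (X : po) (TW : term_model W X) e (u : TW) :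
  nd_set e u -> (forall n, Dp TW u n -> Dp TW (tnode TW e) n) -> False.
Proof.
  intros hu Hd. destruct (Dp_ex u) as [n0 H0]. revert H0. induction n0 as [|k IHk]; intro Hk.
  - destruct (Dp_node_inv (Hd _ Hk)) as [m [E _]]; discriminate.
  - destruct (Dp_node_inv (Hd _ Hk)) as [m [E Hm]]. injection E; intros; subst. auto.
Qed.

Lemma tle_anti (W : dilator) (X : po) (TW : term_model W X) (Hn : normal W) (s t : TW) :
  tle TW s t -> tle TW t s -> s = t.
Proof.
  destruct (tm_cases s) as [[x E] | [d E]]; destruct (tm_cases t) as [[y E'] | [e E']]; subst.
  - intros H1 H2. f_equal. apply ple_anti; apply (le_bar_bar (TW:=TW)); auto.
  - intros _ H; exfalso; exact (node_le_bar_false H).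
  - intros H; exfalso; exact (node_le_bar_false H).
  - intros H1 H2.
    pose proof H1 as H1'. pose proof H2 as H2'.
    rewrite tle_def in H1, H2.
    destruct H1 as [[x' [y' [E1 [E2 Hl]]]] | [[e' [E [u [hu Hsu]]]] | [d1 [e1 [E1 [E [h1 L1]]]]]]].
    + bn.
    + apply tnode_inj in E; subst e'. exfalso. apply (NS (TW:=TW) hu).
      intros n Dn. exact (HL Hn H2' (HL Hn Hsu Dn)).
    + apply tnode_inj in E; apply tnode_inj in E1; subst d1 e1.
      destruct H2 as [[x' [y' [E1 [E2 Hl]]]] | [[e' [E [u [hu Hsu]]]] | [d2 [e2 [E1 [E [h2 L2]]]]]]].
      * bn.
      * apply tnode_inj in E; subst e'. exfalso. apply (NS (TW:=TW) hu).
        intros n Dn. exact (HL Hn H1' (HL Hn Hsu Dn)).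
      * apply tnode_inj in E; apply tnode_inj in E1; subst d2 e2.
        destruct d as [a pa σ sa]; destruct e as [b pb τ sb]; simpl in *.
        assert (sw : forall x, union2 b a x -> union2 a b x) by (unfold union2; tauto).
        pose proof (proj2 (Wm_emb (incl_sub_emb h2 h1 sw) _ _) L2) as L2'.
        rewrite (W_incl_comp pb h2 h1 _ sw (fun x hx => or_intror hx)) in L2'.
        rewrite (W_incl_comp pa h2 h1 _ sw (fun x hx => or_introl hx)) in L2'.
        pose proof (ple_anti L1 L2') as EQ.
        assert (Eab : a = b).
        { apply functional_extensionality; intro u; apply propositional_extensionality; split; intro hu.
          - assert (S1 : supp W (Wm W (incl_sub pa h1 (fun x hx => or_introl hx)) σ)
                           (exist _ u (or_introl hu))) by (apply supp_incl; auto).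
            rewrite EQ in S1. apply supp_incl in S1; auto.
          - assert (S1 : supp W (Wm W (incl_sub pb h1 (fun x hx => or_intror hx)) τ)
                           (exist _ u (or_intror hu))) by (apply supp_incl; auto).
            rewrite <- EQ in S1. apply supp_incl in S1; auto. }
        subst b. assert (pb = pa) by apply proof_irrelevance. subst pb.
        rewrite (incl_sub_eq pa h1 (fun x hx => or_intror hx) (fun x hx => or_introl hx)) in EQ.
        assert (σ = τ).
        { pose proof (Wm_emb (d:=W) (incl_sub_emb pa h1 (fun x hx => or_introl hx))) as Em.
          apply ple_anti; apply Em; rewrite EQ; apply ple_refl. }
        subst τ. assert (sb = sa) by apply proof_irrelevance. subst sb. reflexivity.
Qed.

Definition Qt (W : dilator) (X : po) (TW : term_model W X) (n : nat) (t : TW) : Prop :=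
  forall r s, Dp TW r n -> Dp TW s n -> Dp TW t n -> tle TW r s -> tle TW s t -> tle TW r t.
Arguments Qt {W X} TW n t.

Lemma trans_step (W : dilator) (X : po) (TW : term_model W X) (Hn : normal W) (n : nat) :
  (forall m, n = S m -> forall t, Qt TW m t) -> forall t, Qt TW n t.
Proof.
  intros IHn t. induction t as [y | e IH] using (tm_ind (t0:=TW));
    intros r s Dr Ds Dt Hrs Hst.
  - destruct (le_bar_inv Hst) as [x [E Hxy]]; subst s.
    destruct (le_bar_inv Hrs) as [z [E Hzx]]; subst r.
    rewrite tle_def; left; exists z, y; split; [|split]; auto. eapply ple_trans; eauto.
  - destruct (Dp_node_inv Dt) as [m [En Hu]]; subst n.
    pose proof Hst as Hst0.
    rewrite tle_def in Hst.
    destruct Hst as [[x' [y' [E1 [E2 Hl]]]] | [[e' [E [u [hu Hsu]]]] | [d [e' [E1 [E [h L]]]]]]].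
    + bn.
    + apply tnode_inj in E; subst e'.
      rewrite tle_def; right; left; exists e; split; auto; exists u; split; auto.
      apply (IH u hu r s Dr Ds); auto. apply (Dp_mono (Hu u hu)); lia.
    + apply tnode_inj in E; subst e' s.
      destruct (Dp_node_inv Ds) as [m' [Em' Hud]]; injection Em'; intros; subst m'.
      pose proof Hrs as Hrs0.
      rewrite tle_def in Hrs.
      destruct Hrs as [[x' [y' [E1 [E2 Hl]]]] | [[d' [E [s' [hs' Hrs']]]] | [c [d' [E1 [E [h0 L0]]]]]]].
      * bn.
      * apply tnode_inj in E; subst d'.
        pose proof (Hn _ _ _ L) as F.
        destruct (F (exist _ s' (or_introl hs'))) as [y' [Sy' Ly']].
        { apply supp_incl; [apply nd_supp| exact hs']. }
        apply supp_incl in Sy'; [|apply nd_supp].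
        rewrite tle_def; right; left; exists e; split; auto; exists (proj1_sig y'); split; auto.
        apply (IH _ Sy' r s' Dr); auto.
        -- apply (Dp_mono (Hud s' hs')); lia.
        -- apply (Dp_mono (Hu _ Sy')); lia.
      * apply tnode_inj in E; subst d' r.
        destruct (Dp_node_inv Dr) as [m' [Em2 Huc]]; injection Em2; intros; subst m'.
        pose proof (IHn m eq_refl) as IHm.
        set (U := fun x => nd_set c x \/ nd_set d x \/ nd_set e x).
        assert (DU : forall x, U x -> Dp TW x m) by (intros x [hx|[hx|hx]]; auto).
        assert (hU : po_on (tle TW) U).
        { split; [|split].
          - intros; apply tle_refl.
          - intros x y z hx hy hz. apply (IHm z x y); auto.
          - intros x y _ _. apply tle_anti; auto. }
        assert (s1 : forall x, union2 (nd_set c) (nd_set e) x -> U x)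
          by (unfold U, union2; tauto).
        pose (hcb := po_on_sub s1 hU).
        rewrite tle_def; right; right; exists c, e; split; auto; split; auto; exists hcb.
        assert (s0 : forall x, union2 (nd_set c) (nd_set d) x -> U x)
          by (unfold U, union2; tauto).
        assert (s2 : forall x, union2 (nd_set d) (nd_set e) x -> U x)
          by (unfold U, union2; tauto).
        pose proof (proj2 (Wm_emb (d:=W) (incl_sub_emb h0 hU s0) _ _) L0) as L0'.
        rewrite (W_incl_comp (nd_po c) h0 hU _ s0 (fun x hx => or_introl hx)) in L0'.
        rewrite (W_incl_comp (nd_po d) h0 hU _ s0 (fun x hx => or_intror (or_introl hx))) in L0'.
        pose proof (proj2 (Wm_emb (d:=W) (incl_sub_emb h hU s2) _ _) L) as L'.
        rewrite (W_incl_comp (nd_po d) h hU _ s2 (fun x hx => or_intror (or_introl hx))) in L'.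
        rewrite (W_incl_comp (nd_po e) h hU _ s2 (fun x hx => or_intror (or_intror hx))) in L'.
        pose proof (ple_trans L0' L') as L2.
        apply (proj1 (Wm_emb (d:=W) (incl_sub_emb hcb hU s1) _ _)).
        rewrite (W_incl_comp (nd_po c) hcb hU _ s1 (fun x hx => or_introl hx)).
        rewrite (W_incl_comp (nd_po e) hcb hU _ s1 (fun x hx => or_intror (or_intror hx))).
        exact L2.
Qed.

Lemma tle_trans (W : dilator) (X : po) (TW : term_model W X) (Hn : normal W) (r s t : TW) :
  tle TW r s -> tle TW s t -> tle TW r t.
Proof.
  destruct (Dp_ex r) as [n1 D1]; destruct (Dp_ex s) as [n2 D2]; destruct (Dp_ex t) as [n3 D3].
  assert (Hall : forall n t, Qt TW n t).
  { induction n as [|m IHm]; apply trans_step; auto; intros m' E; [discriminate|].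
    injection E; intros; subst; auto. }
  apply (Hall (n1 + n2 + n3) t); [apply (Dp_mono D1) | apply (Dp_mono D2) | apply (Dp_mono D3)]; lia.
Qed.

Lemma NF (W : dilator) (X : po) (TW : term_model W X) (H : is_po (tle TW))
  (σ : W (PO_of H)) : exists d : node_data W (tle TW),
    Wm W (incl_top H (nd_po d)) (nd_elt d) = σ.
Proof.
  set (A := fun x : TW => supp W σ x).
  assert (hA : po_on (tle TW) A) by (apply is_po_on; exact H).
  destruct (proj2 (supp_rng (incl_top_emb H hA) σ)) as [s0 Es0].
  { intros y hy. exists (exist _ y hy). reflexivity. }
  assert (Hs : forall u, supp W s0 u).
  { intros [y hy]. pose proof hy as hy'. unfold A in hy'. rewrite <- Es0 in hy'.
    apply supp_nat in hy'. destruct hy' as [[x hx] [Sx Ex]]. simpl in Ex. subst x.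
    assert (hx = hy) by apply proof_irrelevance; subst hx.
    exact Sx. }
  exists {| nd_set := A; nd_po := hA; nd_elt := s0; nd_supp := Hs |}. exact Es0.
Qed.

Theorem theorem3p3 (W : dilator) (X : po) (TW : term_model W X) :
  normal W ->
  exists H : is_po (tle TW),
    forall kappa : W (PO_of H) -> PO_of H,
      (* kappa_X(sigma) = circ(a, sigma0) whenever sigma =_NF W(iota_a)(sigma0) *)
      (forall d : node_data W (tle TW),
          kappa (Wm W (incl_top H (nd_po d)) (nd_elt d)) = tnode TW d) ->
      kruskal_fp W X (PO_of H) (tbar TW) kappa.
Proof.
  intros Hn.
  assert (H : is_po (tle TW)).
  { split; [|split].
    - apply tle_refl.
    - intros; eapply tle_trans; eauto.
    - intros; apply tle_anti; auto. }
  exists H. intros kappa Hk.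
  split; [|split; [|split; [|split]]].
  - intros x s E. destruct (NF (H:=H) s) as [d Ed]. subst s. rewrite Hk in E. exact (tbar_node E).
  - intros x y Hl. exact (le_bar_bar Hl).
  - intros x t. destruct (NF (H:=H) t) as [e Ee]. subst t. rewrite Hk. simpl. split.
    + intro Hl. rewrite tle_def in Hl.
      destruct Hl as [[x' [y' [E1 [E2 Hl]]]] | [[e' [E [u [hu Hsu]]]] | [d [e' [E1 [E [h L]]]]]]].
      * bn.
      * apply tnode_inj in E; subst e'.
        intros z Ez; subst z. exists u; split; auto.
        apply (supp_top (H:=H)); [apply nd_supp | exact hu].
      * bn.
    + intro F. destruct (F _ eq_refl) as [y [Sy Ly]].
      apply supp_top in Sy; [|apply nd_supp].
      rewrite tle_def; right; left; exists e; split; auto; exists y; split; auto.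
  - intros s y. destruct (NF (H:=H) s) as [d Ed]. subst s. rewrite Hk. simpl.
    apply node_le_bar_false.
  - intros s t. destruct (NF (H:=H) s) as [d Ed]. destruct (NF (H:=H) t) as [e Ee]. subst s t.
    rewrite !Hk. simpl. split.
    + intro Hl. rewrite tle_def in Hl.
      destruct Hl as [[x' [y' [E1 [E2 Hl]]]] | [[e' [E [u [hu Hsu]]]] | [d' [e' [E1 [E [h L]]]]]]].
      * bn.
      * apply tnode_inj in E; subst e'. right.
        intros z Ez; subst z. exists u; split; auto.
        apply (supp_top (H:=H)); [apply nd_supp | exact hu].
      * apply tnode_inj in E; apply tnode_inj in E1; subst d' e'. left.
        pose proof (proj2 (Wm_emb (d:=W) (incl_top_emb H h) _ _) L) as L'.
        rewrite (W_top_comp H (nd_po d) h) in L'.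
        rewrite (W_top_comp H (nd_po e) h) in L'.
        exact L'.
    + intros [Hl | F].
      * rewrite tle_def; right; right; exists d, e; split; auto; split; auto.
        assert (h : po_on (tle TW) (union2 (nd_set d) (nd_set e))) by (apply is_po_on; exact H).
        exists h.
        apply (proj1 (Wm_emb (d:=W) (incl_top_emb H h) _ _)).
        rewrite (W_top_comp H (nd_po d) h).
        rewrite (W_top_comp H (nd_po e) h).
        exact Hl.
      * destruct (F _ eq_refl) as [y [Sy Ly]].
        apply supp_top in Sy; [|apply nd_supp].
        rewrite tle_def; right; left; exists e; split; auto; exists y; split; auto.
Qed.
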